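(* For every integer $n\ge1$, $$F_{2n-2}=\sum_{(a_1,\dots,a_k)\in C(n)}(2^{a_1-1}-1)(2^{a_2-1}-1)\cdots(2^{a_k-1}-1).$$
   Context: $C(n)$ is the set of all compositions $(a_1,\dots,a_k)$ of $n$ (sequences of positive integers with sum $n$, any number of parts). Fibonacci numbers: $F_0=0$, $F_1=1$, $F_n=F_{n-1}+F_{n-2}$. *)

(* Defs.v *)
From mathcomp Require Import all_boot all_order all_algebra.
Set Implicit Arguments. Unset Strict Implicit. Unset Printing Implicit Defensive.

Fixpoint fib (n : nat) : nat :=
  match n with
  | 0 => 0
  | 1 => 1
  | (m.+1 as p).+1 => fib p + fib m
  end.

Definition is_composition (n : nat) (s : seq nat) : bool :=
  all (fun a => 0 < a) s && (sumn s == n).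

Definition comp_weight (s : seq nat) : int :=
  \prod_(a <- s) ((2 ^ a.-1)%:Z - 1)%R.

(* Every composition of n has k <= n parts, each part <= n,
   so C(n) is exactly the set of sequences of length k < n.+1 with entries in
   'I_n.+1 satisfying is_composition n; distinct (k, tuple) give distinct seqs. *)
Definition comp_sum (n : nat) : int :=
  \sum_(k < n.+1) \sum_(t : k.-tuple 'I_n.+1 |
        is_composition n (map (@nat_of_ord _) t)) comp_weight (map (@nat_of_ord _) t).

(* Main.v *)
Require Import Defs.
From mathcomp Require Import all_boot all_order all_algebra.
From mathcomp Require Import ring zify.
Set Implicit Arguments. Unset Strict Implicit. Unset Printing Implicit Defensive.
Import GRing.Theory.

Definition incr (s : seq nat) : seq nat :=
  if s is a :: t then a.+1 :: t else [::].

Fixpoint comps (m : nat) : seq (seq nat) :=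
  if m is m'.+1 then
    [seq 1 :: s | s <- comps m'] ++ [seq incr s | s <- comps m' & s != [::]]
  else [:: [::]].

Lemma comps_S m : comps m.+1 =
  [seq 1 :: s | s <- comps m] ++ [seq incr s | s <- comps m & s != [::]].
Proof. by []. Qed.

Lemma comps_mem m s : (s \in comps m) = is_composition m s.
Proof.
elim: m s => [|m IH] s.
  case: s => [|a t] //=; rewrite /is_composition /= inE //=.
  by apply/esym/negbTE; rewrite negb_and; case: a => //= a; rewrite orbT.
rewrite comps_S; apply/idP/idP.
  rewrite mem_cat => /orP [/mapP [t Ht ->] | /mapP [t]].
    by move: Ht; rewrite IH /is_composition /= => /andP [-> /eqP ->]; rewrite add1n eqxx.
  rewrite mem_filter => /andP [Hne Ht] ->.
  case: t Hne Ht => [|a t] // _; rewrite IH /is_composition /= => /andP [/andP [_ ->] /eqP <-].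
  by rewrite addSn eqxx.
case: s => [|a t]; first by rewrite /is_composition /=.
rewrite /is_composition /= => /andP [/andP [Ha Hall] /eqP Hs].
rewrite mem_cat; case: a Ha Hs => [|[|a]] // _ Hs.
  apply/orP; left; apply/map_f; rewrite IH /is_composition Hall /=.
  by apply/eqP; lia.
apply/orP; right; apply/mapP; exists (a.+1 :: t) => //.
rewrite mem_filter /= IH /is_composition /= Hall /=; apply/eqP; lia.
Qed.

Lemma comps_uniq m : uniq (comps m).
Proof.
elim: m => [|m IH] //.
rewrite comps_S cat_uniq; apply/and3P; split.
- by rewrite map_inj_uniq // => x y [].
- apply/hasPn => x /mapP [t]; rewrite mem_filter => /andP [Hne Ht] ->.
  apply/mapP => [[u _]]; case: t Hne Ht => [|a t] // _.
  rewrite comps_mem /is_composition /= => /andP [/andP [Ha _] _] [E _].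
  by move: Ha; rewrite E.
- rewrite map_inj_in_uniq ?filter_uniq // => x y.
  rewrite !mem_filter; case: x => [|a x] //; case: y => [|b y] //= _ _ [-> ->].
  by [].
Qed.

Lemma all_pos_size s : all (fun a => 0 < a) s -> size s <= sumn s.
Proof. elim: s => [|a s IH] //= /andP [Ha /IH]; lia. Qed.

Lemma all_le_sumn s : all (fun a => a <= sumn s) s.
Proof.
elim: s => [|a s IH] //=; rewrite leq_addr /=.
by apply/allP => x Hx; move/allP: IH => /(_ x Hx); lia.
Qed.

Local Open Scope ring_scope.

Definition Aall m : int := \sum_(s <- comps m) comp_weight s.
Definition Ap m : int := \sum_(s <- comps m | s != [::]) comp_weight s.
Definition Bp m : int := \sum_(s <- comps m | s != [::]) comp_weight (behead s).

Lemma w_cons a s : comp_weight (a :: s) = ((2 ^ a.-1)%:Z - 1) * comp_weight s.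
Proof. by rewrite /comp_weight big_cons. Qed.

Lemma sum_first (C : seq (seq nat)) (P : pred (seq nat)) :
  \sum_(s <- [seq 1 :: s | s <- C] | P s) comp_weight s = 0.
Proof. by rewrite big_map big1 // => s _; rewrite w_cons /= subrr mul0r. Qed.

Lemma Aall_S m : Aall m.+1 = Ap m.+1.
Proof.
rewrite /Aall /Ap comps_S !big_cat /= !big_map; congr (_ + _).
rewrite big_filter big_filter_cond; apply: eq_bigl => s; case: s => //.
Qed.

Lemma Ap_S m : Ap m.+1 = 2 * Ap m + Bp m.
Proof.
rewrite /Ap /Bp comps_S big_cat /= sum_first add0r big_map big_filter_cond.
rewrite mulr_sumr -big_split /= big_seq_cond [RHS]big_seq_cond.
apply: eq_big => s; first by case: s.
case: s => [|a t]; first by rewrite andbF.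
rewrite andbT comps_mem /is_composition /= => /andP [/andP [Ha _] _].
rewrite !w_cons; case: a Ha => // a _ /=.
rewrite expnS PoszM; ring.
Qed.

Lemma Bp_S m : Bp m.+1 = Aall m + Bp m.
Proof.
rewrite /Bp /Aall comps_S big_cat /= !big_map big_filter_cond; congr (_ + _).
by apply: eq_big => // s; case: s.
Qed.

Lemma main_rec m : Ap m.+1 = (fib (2 * m))%:Z /\ Bp m.+1 = (fib (2 * m).+1)%:Z - (fib (2 * m))%:Z.
Proof.
elim: m => [|m [IHa IHb]].
  by rewrite /Ap /Bp /= !big_cons !big_nil /comp_weight /= !big_cons !big_nil.
rewrite (Ap_S m.+1) (Bp_S m.+1) Aall_S IHa IHb.
have -> : (2 * m.+1 = (2 * m).+2)%N by lia.
rewrite /=; split; rewrite ?PoszD; ring.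
Qed.

Lemma inner n k :
  \sum_(t : k.-tuple 'I_n.+1 | is_composition n (map (@nat_of_ord _) t))
     comp_weight (map (@nat_of_ord _) t)
  = \sum_(s <- comps n | size s == k) comp_weight s.
Proof.
have -> : \sum_(t : k.-tuple 'I_n.+1 | is_composition n (map (@nat_of_ord _) t))
     comp_weight (map (@nat_of_ord _) t) =
   \sum_(s <- [seq map (@nat_of_ord _) (tval t) | t <- enum {: k.-tuple 'I_n.+1}] | is_composition n s) comp_weight s.
  by rewrite big_map big_enum_cond /=; apply: eq_bigl => t; rewrite ?inE.
rewrite -big_filter -[RHS]big_filter; apply: perm_big; apply: uniq_perm.
- rewrite filter_uniq // map_inj_uniq ?enum_uniq // => t1 t2 /(inj_map val_inj) E.
  exact: val_inj.
- by rewrite filter_uniq // comps_uniq.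
move=> s; rewrite !mem_filter comps_mem.
apply/idP/idP.
  move=> /andP [-> /mapP [t _ ->]]; by rewrite size_map size_tuple eqxx.
move=> /andP [/eqP Hk Hc]; rewrite Hc /=.
have Hsz : size (map (@inord n) s) == k by rewrite size_map Hk.
apply/mapP; exists (Tuple Hsz); first by rewrite mem_enum.
rewrite /= -map_comp map_id_in // => a Ha /=; rewrite inordK //.
move: Hc; rewrite /is_composition => /andP [_ /eqP <-].
by move/allP: (all_le_sumn s) => /(_ a Ha).
Qed.


Lemma comp_sum_Aall n : comp_sum n = Aall n.
Proof.
rewrite /comp_sum; under eq_bigr => k _ do rewrite inner big_mkcond.
rewrite exchange_big /Aall big_seq [RHS]big_seq; apply: eq_bigr => s Hs.
rewrite -big_mkcond /=.
have Hsz : (size s < n.+1)%N.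
  move: Hs; rewrite comps_mem /is_composition => /andP [Hp /eqP <-].
  by rewrite ltnS all_pos_size.
rewrite (bigD1 (Ordinal Hsz)) /= ?eqxx // big1 ?addr0 // => i /andP [/eqP Hi Hne].
by case/eqP: Hne; apply: val_inj; rewrite /= Hi.
Qed.

Local Close Scope ring_scope.

Theorem mainTheorem12 (n : nat) (hn : 1 <= n) :
  Posz (fib (2 * n - 2)) = comp_sum n.
Proof.
case: n hn => [|m] // _.
rewrite comp_sum_Aall Aall_S (main_rec m).1.
by have -> : (2 * m.+1 - 2 = 2 * m)%N by lia.
Qed.
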